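(* Fix $c>0$, $\lambda>1$, one of the six models, $N$, and $1\le N_1,N_2\le N-1$ with $N_1+N_2=N$. For every $r=1,\dots,\lfloor cN\rfloor$, $$\mathbb{E}\big[\log Z(\mathbb{G}(N,\lfloor cN\rfloor,r))\big]\ge\mathbb{E}\big[\log Z(\mathbb{G}(N,\lfloor cN\rfloor,r-1))\big].$$
   Context: Let $K\ge2$, $\chi=\{0,\dots,q-1\}$, $[N_1]=\{1,\dots,N_1\}$, $[N_2]=\{N_1+1,\dots,N\}$. For $0\le r\le\lfloor cN\rfloor$, $\mathbb{G}(N,\lfloor cN\rfloor,r)$ is the random hypergraph on $[N]$ with $\lfloor cN\rfloor$ independently generated directed $K$-hyperedges: the first $r$ uniform on $[N]^K$, each remaining one uniform on $[N_1]^K$ with probability $N_1/N$ and uniform on $[N_2]^K$ with probability $N_2/N$; potentials are assigned as in the model. $H(x)=\sum_iH_i(x_i)+\sum_{e\in E}H_e(x_e)$ and $Z(G)=\sum_{x\in\chi^N}\lambda^{H(x)}$, $\lambda^{-\infty}=0$. Models: Independent set ($K=2,q=2$, $H_i(1)=1,H_i(0)=0$, $H_e(1,1)=-\infty$, else $0$); MAX-CUT ($K=2,q=2$, $H_i\equiv0$, $H_e(x,y)=\mathbf 1[x\ne y]$); anti-ferromagnetic Ising ($K=2,q=2$, fixed $\beta>0,B\in\mathbb{R}$, $H_i(0)=-B,H_i(1)=B$, $H_e(x,y)=-\beta$ if $x=y$, $\beta$ otherwise); $q$-Coloring ($K=2$, $H_i\equiv0$, $H_e(x,y)=\mathbf 1[x\ne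 y]$); K-SAT ($q=2$, $H_i\equiv0$, independent uniform $a_e\in\{0,1\}^K$, $H_e(a_e)=0$, $1$ otherwise); NAE-K-SAT ($H_e(a_e)=H_e(\mathbf1-a_e)=0$, $1$ otherwise). *)

(* Defs.v *)
From HB Require Import structures.
From mathcomp Require Import all_boot all_order all_algebra.
From mathcomp Require Import all_classical all_reals all_analysis.
Unset Printing Implicit Defensive.
Import Order.TTheory GRing.Theory Num.Theory.
Local Open Scope ring_scope.

(* The six models.  Ising carries (beta, B); Coloring carries q;
   K-SAT / NAE-K-SAT carry K. *)
Inductive model (R : Type) :=
| IndSet | MaxCut | Ising of R & R | Coloring of nat | KSAT of nat | NAEKSAT of nat.
Arguments IndSet {R}. Arguments MaxCut {R}.

Section Models.
Variable R : realType.

Definition arity (m : model R) : nat :=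
  match m with KSAT K | NAEKSAT K => K | _ => 2%N end.

(* number of spin values q, chi = {0,..,q-1} *)
Definition spins (m : model R) : nat :=
  match m with Coloring q => q | _ => 2%N end.

Definition model_ok (m : model R) : Prop :=
  match m with
  | Ising beta _ => 0 < beta
  | Coloring q => (0 < q)%N
  | KSAT K | NAEKSAT K => (2 <= K)%N
  | _ => True
  end.

Definition has_signs (m : model R) : bool :=
  match m with KSAT _ | NAEKSAT _ => true | _ => false end.

Definition Hnode (m : model R) (x : nat) : \bar R :=
  match m with
  | IndSet => if x == 1%N then 1%E else 0%E
  | Ising _ B => if x == 0%N then (- B)%:E else B%:E
  | _ => 0%E
  end.

Definition Hedge (m : model R) (a : 'I_(arity m) -> bool)
  (xe : 'I_(arity m) -> nat) : \bar R :=
  match m return ('I_(arity m) -> bool) -> ('I_(arity m) -> nat) -> \bar R with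
  | IndSet => fun _ xe =>
      if [forall j, xe j == 1%N] then -oo%E else 0%E
  | MaxCut | Coloring _ => fun _ xe =>
      if [forall j, forall j', xe j == xe j'] then 0%E else 1%E
  | Ising beta _ => fun _ xe =>
      if [forall j, forall j', xe j == xe j'] then (- beta)%:E else beta%:E
  | KSAT K => fun a xe =>
      if [forall j, xe j == nat_of_bool (a j)] then 0%E else 1%E
  | NAEKSAT K => fun a xe =>
      if [forall j, xe j == nat_of_bool (a j)]
         || [forall j, xe j == nat_of_bool (~~ a j)] then 0%E else 1%E
  end a xe.

(* lambda^h, with lambda^(-oo) = 0 (+oo never occurs) *)
Definition lampow (lam : R) (h : \bar R) : R :=
  match h with
  | EFin r => powR lam r
  | _ => 0
  end.

(* a directed K-hyperedge together with its sign vector *)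
Definition hedge (m : model R) (N : nat) : Type :=
  ({ffun 'I_(arity m) -> 'I_N} * {ffun 'I_(arity m) -> bool})%type.

Definition hgraph (m : model R) (N M : nat) : Type :=
  {ffun 'I_M -> hedge m N}.

Definition Ham (m : model R) (N M : nat) (G : hgraph m N M)
  (x : {ffun 'I_N -> 'I_(spins m)}) : \bar R :=
  ((\sum_(i < N) Hnode m (x i))
   + \sum_(k < M) Hedge m (G k).2 (fun j => nat_of_ord (x ((G k).1 j))))%E.

Definition Zpart (m : model R) (lam : R) (N M : nat) (G : hgraph m N M) : R :=
  \sum_(x : {ffun 'I_N -> 'I_(spins m)}) lampow lam (Ham m N M G x).

(* Vertices are 'I_N (0-based); [N1] is the set
   of indices < N1 and [N2] the set of indices >= N1. *)
Definition pvert (m : model R) (N N1 N2 r k : nat)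
  (v : {ffun 'I_(arity m) -> 'I_N}) : R :=
  if (k < r)%N then (N ^ arity m)%:R^-1
  else (N1%:R / N%:R) * (N1 ^ arity m)%:R^-1
         * (([forall j, v j < N1])%N : bool)%:R
     + (N2%:R / N%:R) * (N2 ^ arity m)%:R^-1
         * (([forall j, N1 <= v j])%N : bool)%:R.

Definition psign (m : model R) (a : {ffun 'I_(arity m) -> bool}) : R :=
  if has_signs m then (2 ^ arity m)%:R^-1
  else (a == [ffun => false])%:R.

Definition pgraph (m : model R) (N N1 N2 M r : nat) (G : hgraph m N M) : R :=
  \prod_(k < M) (pvert m N N1 N2 r k (G k).1 * psign m (G k).2).

Definition ElogZ (m : model R) (lam : R) (N N1 N2 M r : nat) : R :=
  \sum_(G : hgraph m N M) pgraph m N N1 N2 M r G * ln (Zpart m lam N M G).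

End Models.

(* Main.v *)
Require Import Defs.
From HB Require Import structures.
From mathcomp Require Import all_boot all_order all_algebra.
From mathcomp Require Import all_classical all_reals all_analysis.
From mathcomp Require Import ring lra zify.
From Stdlib Require Import Lia.
Import Order.TTheory GRing.Theory Num.Theory.
Local Open Scope ring_scope.

Section Core.
Variable R : realType.

Lemma ln_le_sub1 (x : R) : 0 < x -> ln x <= x - 1.
Proof.
move=> x0; have := @le_ln1Dx R (x - 1).
have -> : 1 + (x - 1) = x by ring.
by apply; lra.
Qed.

Lemma ln_diff_le (a b : R) : 0 < a -> 0 < b -> ln b - ln a <= b / a - 1.
Proof.
move=> a0 b0; rewrite -ln_div ?posrE //; apply: ln_le_sub1; exact: divr_gt0.
Qed.

Lemma ln_diff_ge (a b : R) : 0 < a -> 0 < b -> 1 - a / b <= ln b - ln a.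
Proof.
move=> a0 b0; have := @ln_diff_le b a b0 a0; lra.
Qed.

Lemma lim_arch (a b C : R) :
  (forall n : nat, (0 < n)%N -> a <= b + C / n%:R) -> a <= b.
Proof.
move=> H; apply/ler_addgt0Pr => e e0.
set n := (Num.truncn (C / e)).+1.
apply: (le_trans (H n isT)); rewrite lerD2l.
have n0 : (0 : R) < n%:R by rewrite ltr0n.
rewrite ler_pdivrMr //.
have := truncnS_gt (C / e); rewrite -/n => h.
rewrite ltr_pdivrMr // in h; rewrite mulrC; exact: ltW.
Qed.

Lemma geom (z : R) n : (1 - z) * \sum_(t < n) z ^+ t = 1 - z ^+ n.
Proof.
elim: n => [|n IH]; first by rewrite big_ord0 expr0 mulr0 subrr.
by rewrite big_ord_recr /= mulrDr IH exprS; ring.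
Qed.

Lemma pow_bound (y : R) n : 0 <= y < 1 -> (0 < n)%N ->
  y ^+ n <= ((1 - y) * n%:R)^-1.
Proof.
move=> /andP[y0 y1] n0.
have h1 : n%:R * y ^+ n <= \sum_(t < n) y ^+ t.
  have -> : n%:R * y ^+ n = \sum_(t < n) y ^+ n by rewrite sumr_const card_ord mulr_natl.
  apply: ler_sum => t _.
  by apply: ler_wiXn2l => //; [exact: ltW | exact: ltnW].
have h2 := geom y n.
have yn0 : 0 <= y ^+ n by exact: exprn_ge0.
rewrite -[_^-1]mul1r ler_pdivlMr ?mulr_gt0 ?subr_gt0 ?ltr0n //.
have : (1 - y) * (n%:R * y ^+ n) <= 1.
  apply: (le_trans (y := (1 - y) * \sum_(t < n) y ^+ t)).
    by apply: ler_wpM2l => //; rewrite subr_ge0 ltW.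
  by rewrite h2; lra.
by move=> h; apply: le_trans h; rewrite le_eqVlt; apply/orP; left; apply/eqP; ring.
Qed.

Definition hh (s y : R) := y / (1 - s * y).

Lemma hh_expand (s y : R) n : 0 <= s <= 1 -> 0 <= y < 1 ->
  hh s y = \sum_(t < n) s ^+ t * y ^+ t.+1 + (s * y) ^+ n * hh s y.
Proof.
move=> /andP[s0 s1] /andP[y0 y1].
have d0 : 0 < 1 - s * y.
  rewrite subr_gt0; apply: (le_lt_trans (y := 1 * y)); last by rewrite mul1r.
  exact: ler_wpM2r.
have hd : hh s y * (1 - s * y) = y by rewrite /hh mulfVK ?lt0r_neq0.
apply: (mulIf (lt0r_neq0 d0)).
rewrite mulrDl hd -mulrA hd mulr_suml.
have -> : \sum_(i < n) s ^+ i * y ^+ i.+1 * (1 - s * y) =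
  y * ((1 - s * y) * \sum_(t < n) (s * y) ^+ t).
  rewrite mulr_sumr mulr_sumr; apply: eq_bigr => i _; rewrite exprMn exprS; ring.
by rewrite geom; ring.
Qed.

Lemma hh_ge0 (s y : R) : 0 <= s <= 1 -> 0 <= y < 1 -> 0 <= hh s y.
Proof.
move=> /andP[s0 s1] /andP[y0 y1]; rewrite /hh divr_ge0 // subr_ge0.
apply: (le_trans (y := 1 * 1)); last by rewrite mul1r.
by apply: ler_pM => //; exact: ltW.
Qed.

Lemma hh_le (s y : R) : 0 <= s <= 1 -> 0 <= y < 1 -> hh s y <= (1 - y)^-1.
Proof.
move=> /andP[s0 s1] /andP[y0 y1]; rewrite /hh.
have d1 : 0 < 1 - y by rewrite subr_gt0.
have d2 : 1 - y <= 1 - s * y.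
  rewrite lerD2l lerN2; apply: (le_trans (y := 1 * y)); last by rewrite mul1r.
  exact: ler_wpM2r.
have d3 : 0 < 1 - s * y by apply: lt_le_trans d2.
apply: (le_trans (y := 1 / (1 - s * y))).
  by apply: ler_wpM2r; [rewrite invr_ge0 ltW | exact: ltW].
by rewrite div1r lef_pV2 ?posrE.
Qed.


Lemma hh_moment (E : finType) (qu qs y : E -> R) s :
  (forall e, 0 <= qu e) -> (forall e, 0 <= qs e) ->
  (forall e, 0 <= y e < 1) -> 0 <= s <= 1 ->
  (forall t, \sum_e qu e * y e ^+ t.+1 <= \sum_e qs e * y e ^+ t.+1) ->
  \sum_e qu e * hh s (y e) <= \sum_e qs e * hh s (y e).
Proof.
move=> qu0 qs0 hy hs hmom.
apply: (@lim_arch _ _ (\sum_e qu e / (1 - y e) ^+ 2)) => n n0.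
have Ex e := hh_expand s (y e) n hs (hy e).
have Tge e : 0 <= (s * y e) ^+ n * hh s (y e).
  case/andP: hs => s0 s1; case/andP: (hy e) => y0 y1.
  apply: mulr_ge0; first by apply: exprn_ge0; exact: mulr_ge0.
  by apply: hh_ge0; apply/andP.
have Tle e : (s * y e) ^+ n * hh s (y e) <= (1 - y e) ^-2 / n%:R.
  case/andP: hs => s0 s1; case/andP: (hy e) => y0 y1.
  have d : 0 < 1 - y e by rewrite subr_gt0.
  apply: (le_trans (y := y e ^+ n * (1 - y e)^-1)).
    apply: ler_pM.
    - by apply: exprn_ge0; exact: mulr_ge0.
    - by apply: hh_ge0; apply/andP.
    - by rewrite exprMn -[X in _ <= X]mul1r ler_wpM2r ?exprn_ge0 ?exprn_ile1.
    by apply: hh_le; apply/andP.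
  apply: (le_trans (y := ((1 - y e) * n%:R)^-1 * (1 - y e)^-1)).
    by apply: ler_wpM2r; [rewrite invr_ge0 ltW | apply: pow_bound => //; apply/andP].
  rewrite le_eqVlt; apply/orP; left; apply/eqP; rewrite !invfM. ring.
have A q : \sum_e q e * hh s (y e) = \sum_(t < n) s ^+ t * \sum_e q e * y e ^+ t.+1
   + \sum_e q e * ((s * y e) ^+ n * hh s (y e)).
  rewrite (eq_bigr (fun e => q e * (\sum_(t < n) s ^+ t * y e ^+ t.+1)
     + q e * ((s * y e) ^+ n * hh s (y e)))); last by move=> e _; rewrite {1}Ex mulrDr.
  rewrite big_split /=; congr (_ + _).
  under eq_bigr do rewrite mulr_sumr.
  rewrite exchange_big /=; apply: eq_bigr => t _.
  by rewrite mulr_sumr; apply: eq_bigr => e _; ring.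
rewrite (A qu) (A qs) -addrA lerD //.
  apply: ler_sum => t _; apply: ler_wpM2l => //.
  by case/andP: hs => s0 _; exact: exprn_ge0.
rewrite mulr_suml -[X in X <= _]add0r lerD //.
  by apply: sumr_ge0 => e _; apply: mulr_ge0.
apply: ler_sum => e _; rewrite -mulrA; apply: ler_wpM2l => //.
Qed.
Lemma a_pos (y : R) n i : 0 <= y < 1 -> (0 < n)%N -> (i <= n)%N ->
  0 < 1 - i%:R / n%:R * y.
Proof.
move=> /andP[y0 y1] n0 ilen.
have n0' : (0 : R) < n%:R by rewrite ltr0n.
have h : i%:R / n%:R <= (1 : R) by rewrite ler_pdivrMr // mul1r ler_nat.
have h0 : 0 <= i%:R / n%:R :> R by rewrite divr_ge0.
rewrite subr_gt0; apply: (le_lt_trans (y := 1 * y)); last by rewrite mul1r.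
exact: ler_wpM2r.
Qed.

Lemma ln_tele (y : R) n : 0 <= y < 1 -> (0 < n)%N ->
  ln (1 - y) = \sum_(i < n) (ln (1 - i.+1%:R / n%:R * y) - ln (1 - i%:R / n%:R * y)).
Proof.
move=> hy n0.
rewrite -(big_mkord xpredT (fun i => ln (1 - i.+1%:R / n%:R * y) - ln (1 - i%:R / n%:R * y))).
rewrite telescope_sumr // !mul0r subr0 ln1 subr0 divff ?mul1r //.
by rewrite pnatr_eq0 -lt0n.
Qed.

Lemma ln_upper (y : R) n : 0 <= y < 1 -> (0 < n)%N ->
  ln (1 - y) <= - (n%:R^-1 * \sum_(i < n) hh (i%:R / n%:R) y).
Proof.
move=> hy n0; rewrite (ln_tele _ _ hy n0) mulr_sumr -sumrN; apply: ler_sum => i _.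
have a0 := a_pos y n i hy n0 (ltnW (ltn_ord i)).
have a1 := a_pos y n i.+1 hy n0 (ltn_ord i).
apply: (le_trans (ln_diff_le _ _ a0 a1)).
have nn : n%:R != 0 :> R by rewrite pnatr_eq0 -lt0n.
rewrite le_eqVlt; apply/orP; left; apply/eqP; rewrite /hh.
rewrite -addn1 natrD; field; rewrite nn /=.
have -> : n%:R - i%:R * y = n%:R * (1 - i%:R / n%:R * y) by field.
by rewrite mulf_neq0 // lt0r_neq0.
Qed.

Lemma ln_lower (y : R) n : 0 <= y < 1 -> (0 < n)%N ->
  - (n%:R^-1 * \sum_(i < n) hh (i.+1%:R / n%:R) y) <= ln (1 - y).
Proof.
move=> hy n0; rewrite (ln_tele _ _ hy n0) mulr_sumr -sumrN; apply: ler_sum => i _.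
have a0 := a_pos y n i hy n0 (ltnW (ltn_ord i)).
have a1 := a_pos y n i.+1 hy n0 (ltn_ord i).
apply: (le_trans _ (ln_diff_ge _ _ a0 a1)).
have nn : n%:R != 0 :> R by rewrite pnatr_eq0 -lt0n.
rewrite le_eqVlt; apply/orP; left; apply/eqP; rewrite /hh.
rewrite -addn1 natrD; field; rewrite nn /=.
have -> : n%:R - (i%:R + 1) * y = n%:R * (1 - i.+1%:R / n%:R * y) by rewrite -addn1 natrD; field.
by rewrite mulf_neq0 // lt0r_neq0.
Qed.
Lemma shift_sum (G : nat -> R) n : (0 < n)%N ->
  \sum_(i < n) G (0 + i)%N = \sum_(i < n) G (1 + i)%N + G 0%N - G n.
Proof.
case: n => [//|n] _.
rewrite big_ord_recl big_ord_recr /= addn0.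
have -> : \sum_(i < n) G (0 + bump 0 i)%N = \sum_(i < n) G (1 + i)%N.
  by apply: eq_bigr => i _.
rewrite add1n; ring.
Qed.

Lemma core_ineq (E : finType) (qu qs y : E -> R) :
  (forall e, 0 <= qu e) -> (forall e, 0 <= qs e) ->
  (forall e, 0 <= y e < 1) ->
  (forall t, \sum_e qu e * y e ^+ t.+1 <= \sum_e qs e * y e ^+ t.+1) ->
  \sum_e qs e * ln (1 - y e) <= \sum_e qu e * ln (1 - y e).
Proof.
move=> qu0 qs0 hy hmom.
apply: (@lim_arch _ _ (\sum_e qu e * hh 1 (y e) - \sum_e qu e * hh 0 (y e))) => n n0.
pose F q j := \sum_e q e * hh (j%:R / n%:R) (y e).
have swap q k : \sum_(i < n) F q (k + i)%N =
    \sum_e q e * \sum_(i < n) hh ((k + i)%N%:R / n%:R) (y e).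
  rewrite /F exchange_big /=; apply: eq_bigr => e _; by rewrite mulr_sumr.
have S1 : \sum_e qs e * ln (1 - y e) <= - (n%:R^-1 * \sum_(i < n) F qs (0 + i)%N).
  rewrite swap mulr_sumr -sumrN; apply: ler_sum => e _.
  rewrite mulrCA -mulrN; apply: ler_wpM2l => //.
  exact: ln_upper.
have S4 : - (n%:R^-1 * \sum_(i < n) F qu (1 + i)%N) <= \sum_e qu e * ln (1 - y e).
  rewrite swap mulr_sumr -sumrN; apply: ler_sum => e _.
  rewrite mulrCA -mulrN; apply: ler_wpM2l => //.
  exact: ln_lower.
have S2 : \sum_(i < n) F qu (0 + i)%N <= \sum_(i < n) F qs (0 + i)%N.
  apply: ler_sum => i _; apply: hh_moment => //.
  have n0' : (0 : R) < n%:R by rewrite ltr0n.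
  rewrite divr_ge0 ?ler0n //= ler_pdivrMr // mul1r ler_nat add0n; exact: ltnW.
have S3 : \sum_(i < n) F qu (0 + i)%N =
   \sum_(i < n) F qu (1 + i)%N + F qu 0%N - F qu n.
  exact: shift_sum.
have Fn : F qu n = \sum_e qu e * hh 1 (y e).
  by rewrite /F divff // pnatr_eq0 -lt0n.
have F0 : F qu 0%N = \sum_e qu e * hh 0 (y e).
  by rewrite /F mul0r.
apply: (le_trans S1).
apply: (le_trans (y := - (n%:R^-1 * \sum_(i < n) F qu (0 + i)%N))).
  rewrite lerN2; apply: ler_wpM2l => //; by rewrite invr_ge0.
rewrite S3 -Fn -F0.
have -> : - (n%:R^-1 * (\sum_(i < n) F qu (1 + i)%N + F qu 0%N - F qu n)) =
   - (n%:R^-1 * \sum_(i < n) F qu (1 + i)%N) + (F qu n - F qu 0%N) / n%:R by ring.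
by rewrite lerD2r.
Qed.
End Core.


Section Gen.
Variable R : realType.

Lemma convex_pow (p q a b : R) K : 0 <= p -> 0 <= q -> p + q = 1 ->
  0 <= a -> 0 <= b -> (p * a + q * b) ^+ K <= p * a ^+ K + q * b ^+ K.
Proof.
move=> p0 q0 pq a0 b0; elim: K => [|K IH].
  by rewrite !expr0 !mulr1 pq.
have s0 : 0 <= p * a + q * b by rewrite addr_ge0 ?mulr_ge0.
rewrite exprSr; apply: (le_trans (ler_wpM2r s0 IH)).
have key : 0 <= (a ^+ K - b ^+ K) * (a - b).
  case: (leP a b) => hab.
    apply: mulr_le0; rewrite subr_le0 //; exact: lerXn2r.
  apply: mulr_ge0; rewrite subr_ge0 //; [apply: lerXn2r => //; exact: ltW | exact: ltW].
have -> : p * a ^+ K.+1 + q * b ^+ K.+1 =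
   (p * a ^+ K + q * b ^+ K) * (p * a + q * b) + p * q * ((a ^+ K - b ^+ K) * (a - b)).
  have hq : q = 1 - p by lra.
  rewrite hq !exprSr; ring.
by rewrite lerDl; apply: mulr_ge0 => //; apply: mulr_ge0.
Qed.

Lemma prod_nat_forall (I : finType) (P : pred I) :
  \prod_(i : I) ((P i)%:R : R) = ([forall i, P i])%:R.
Proof.
case: (boolP [forall i, P i]) => [/forallP H|/forallP H].
  by rewrite big1 // => i _; rewrite H.
have [i Hi] : exists i, ~~ P i by apply/existsP; rewrite -negb_forall; apply/forallP.
by rewrite (bigD1 i) //= (negbTE Hi) mul0r.
Qed.

Lemma sum_prod_pow (K N : nat) (h : 'I_N -> R) :
  \sum_(v : {ffun 'I_K -> 'I_N}) \prod_(j < K) h (v j) = (\sum_u h u) ^+ K.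
Proof.
by rewrite -(bigA_distr_bigA (fun (_ : 'I_K) (u : 'I_N) => h u)) /= prodr_const card_ord.
Qed.

Lemma pow_sum_ffun (T : finType) (g : T -> R) t :
  (\sum_x g x) ^+ t = \sum_(X : {ffun 'I_t -> T}) \prod_(l < t) g (X l).
Proof.
by rewrite -(bigA_distr_bigA (fun (_ : 'I_t) (x : T) => g x)) /= prodr_const card_ord.
Qed.

Definition upd (T : Type) M (G : {ffun 'I_M -> T}) (k0 : 'I_M) (e : T) :=
  [ffun k => if k == k0 then e else G k].
Arguments upd {T M}.

Lemma sum_upd (T : finType) M (k0 : 'I_M) (F : {ffun 'I_M -> T} -> R) :
  #|T|%:R * \sum_G F G = \sum_G \sum_(e : T) F (upd G k0 e).
Proof.
pose phi (p : {ffun 'I_M -> T} * T) := (upd p.1 k0 p.2, p.1 k0).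
have phiK : involutive phi.
  case=> G e; rewrite /phi /=; congr (_, _).
    by apply/ffunP => k; rewrite !ffunE; case: eqP => // ->.
  by rewrite ffunE eqxx.
transitivity (\sum_(p : {ffun 'I_M -> T} * T) F p.1).
  rewrite -(pair_bigA _ (fun G (_ : T) => F G)) /= mulr_sumr.
  by apply: eq_bigr => G _; rewrite sumr_const mulr_natl.
rewrite (reindex_inj (inv_inj phiK)) /=.
by rewrite (pair_bigA _ (fun G e => F (upd G k0 e))).
Qed.
End Gen.


Section Model.
Variable R : realType.

Lemma lampow_ge0 (lam : R) x : 0 <= lampow R lam x.
Proof. by case: x => [r| |] //=; exact: powR_ge0. Qed.

Lemma lampow_gt0 (lam : R) x : 0 < lam -> x \is a fin_num -> 0 < lampow R lam x.
Proof. by move=> l0; case: x => [r| |] //= _; exact: powR_gt0. Qed.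

Lemma add_noinf (x y : \bar R) : x != +oo%E -> y != +oo%E -> (x + y != +oo)%E.
Proof. by case: x => [r| |] //; case: y => [s| |]. Qed.

Lemma sum_noinf (I : Type) (r : seq I) (P : pred I) (F : I -> \bar R) :
  (forall i, P i -> F i != +oo%E) -> (\sum_(i <- r | P i) F i != +oo)%E.
Proof.
move=> H; apply: (big_ind (fun x : \bar R => x != +oo%E)) => //.
exact: add_noinf.
Qed.

Lemma lampowD (lam : R) (x y : \bar R) : 0 < lam -> x != +oo%E -> y != +oo%E ->
  lampow R lam (x + y)%E = lampow R lam x * lampow R lam y.
Proof.
move=> l0; case: x => [r| |] //; case: y => [s| |] //= _ _; rewrite ?mul0r ?mulr0 //.
by rewrite powRD // (lt0r_neq0 l0) implybT.
Qed.

Lemma lampow_sum (lam : R) (I : Type) (r : seq I) (P : pred I) (F : I -> \bar R) :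
  0 < lam -> (forall i, P i -> F i != +oo%E) ->
  lampow R lam (\sum_(i <- r | P i) F i)%E = \prod_(i <- r | P i) lampow R lam (F i).
Proof.
move=> l0 H; elim: r => [|a r IH]; first by rewrite !big_nil /= powRr0.
rewrite !big_cons; case: (boolP (P a)) => Pa //.
rewrite lampowD ?IH //; [exact: H | exact: sum_noinf].
Qed.

Lemma Hnode_fin (m : model R) s : Hnode R m s \is a fin_num.
Proof. by case: m => //= *; case: ifP. Qed.

Lemma Hedge_noinf (m : model R) a xe : Hedge R m a xe != +oo%E.
Proof. by case: m a xe => /= [| |? ?|?|?|?] a xe; case: ifP. Qed.

Lemma Hedge_zero_fin (m : model R) a : Hedge R m a (fun _ => 0%N) \is a fin_num.
Proof.
case: m a => /= [| |? ?|?|?|?] a; case: ifP => //.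
by move/forallP => /(_ ord0).
Qed.



Lemma eq_all_sum (K q : nat) (xe : 'I_K -> nat) : (0 < K)%N -> (forall j, xe j < q)%N ->
  \sum_(c < q) \prod_(j < K) ((xe j == c)%:R : R) = ([forall j, forall j', xe j == xe j'])%:R.
Proof.
move=> K0 Hq; under eq_bigr do rewrite prod_nat_forall.
pose j0 : 'I_K := Ordinal K0.
case: (boolP [forall j, forall j', xe j == xe j']) => [/forallP H|H].
  pose c0 : 'I_q := Ordinal (Hq j0).
  rewrite (bigD1 c0) //= big1 ?addr0.
    suff -> : [forall j, xe j == c0] by [].
    by apply/forallP => j; have /forallP := H j => /(_ j0).
  move=> c /negbTE hc; case: (boolP [forall j, xe j == c]) => // /forallP /(_ j0) /eqP h.
  suff : c0 == c by rewrite eq_sym hc.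
  by apply/eqP/val_inj; rewrite /= -h.
rewrite big1 // => c _; case: (boolP [forall j, xe j == c]) => // /forallP Hc.
case/negP: H; apply/forallP => j; apply/forallP => j'.
by rewrite (eqP (Hc j)) (eqP (Hc j')).
Qed.

Lemma psign_nosign (K : nat) (a : {ffun 'I_K -> bool}) :
  ((a == [ffun => false])%:R : R) = \prod_(j < K) ((a j == false)%:R).
Proof.
rewrite prod_nat_forall.
suff -> : (a == [ffun => false]) = [forall j, a j == false] by [].
apply/idP/idP => [/eqP ->|/forallP H]; first by apply/forallP => j; rewrite ffunE.
by apply/eqP/ffunP => j; rewrite ffunE; apply/eqP.
Qed.

Lemma psign_sign (K : nat) :
  ((2 ^ K)%:R^-1 : R) = \prod_(j < K) 2^-1.
Proof. by rewrite prodr_const card_ord natrX exprVn. Qed.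

Lemma model_decomp (m : model R) (lam : R) : model_ok R m -> 1 < lam ->
  exists A d nc (phi : 'I_nc -> bool -> nat -> R) (rho : bool -> R),
  [/\ 0 < A /\ 0 <= d <= 1, (forall c b s, 0 <= phi c b s), (forall b, 0 <= rho b),
     (forall (a : 'I_(arity R m) -> bool) (xe : 'I_(arity R m) -> nat),
        (forall j, xe j < spins R m)%N ->
        lampow R lam (Hedge R m a xe) =
        A * (1 - d * \sum_(c < nc) \prod_(j < arity R m) phi c (a j) (xe j)))
   & (forall a : {ffun 'I_(arity R m) -> bool},
        psign R m a = \prod_(j < arity R m) rho (a j))].
Proof.
move=> ok l1.
have l0 : 0 < lam by lra.
have lne : lam != 0 by exact: lt0r_neq0.
have d01 : 0 <= 1 - lam^-1 <= 1.
  apply/andP; split; last by rewrite lerBlDr lerDl invr_ge0 ltW.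
  by rewrite subr_ge0 invf_le1 // ltW.
case: m ok => [| |beta B|q|K|K] /= ok.
-
  exists 1, 1, 1%N, (fun _ _ s => (s == 1%N)%:R), (fun b => (b == false)%:R).
  split.
  - by rewrite ltr01 ler01 lexx.
  - by move=> *; rewrite ler0n.
  - by move=> *; rewrite ler0n.
  - move=> a xe _; rewrite big_ord1 prod_nat_forall.
    by case: ifP => _ /=; rewrite ?powRr0; ring.
  - by move=> a; rewrite /psign /= psign_nosign.
-
  exists lam, (1 - lam^-1), 2%N, (fun (c : _) (_ : bool) (s : nat) => (s == nat_of_ord c)%:R), (fun b => (b == false)%:R).
  split.
  - by [].
  - by move=> *; rewrite ler0n.
  - by move=> *; rewrite ler0n.
  - move=> a xe Hx; rewrite eq_all_sum //.
    by case: ifP => _ /=; rewrite ?powRr0 ?powRr1 ?(ltW l0) //; field.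
  - by move=> a; rewrite /psign /= psign_nosign.
-
  have pb : 0 < powR lam beta by exact: powR_gt0.
  have pnb : 0 < powR lam (- beta) by exact: powR_gt0.
  have ple : powR lam (- beta) <= powR lam beta by apply: ler_powR; [exact: ltW | lra].
  exists (powR lam beta), (1 - powR lam (- beta) / powR lam beta), 2%N,
    (fun (c : _) (_ : bool) (s : nat) => (s == nat_of_ord c)%:R), (fun b => (b == false)%:R).
  split.
  - split => //; apply/andP; split.
      by rewrite subr_ge0 ler_pdivrMr // mul1r.
    by rewrite lerBlDr lerDl divr_ge0 // ltW.
  - by move=> *; rewrite ler0n.
  - by move=> *; rewrite ler0n.
  - move=> a xe Hx; rewrite eq_all_sum //.
    case: ifP => _ /=; last by ring.
    by field; apply: lt0r_neq0.
  - by move=> a; rewrite /psign /= psign_nosign.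
-
  exists lam, (1 - lam^-1), q, (fun (c : _) (_ : bool) (s : nat) => (s == nat_of_ord c)%:R), (fun b => (b == false)%:R).
  split.
  - by [].
  - by move=> *; rewrite ler0n.
  - by move=> *; rewrite ler0n.
  - move=> a xe Hx; rewrite eq_all_sum //.
    by case: ifP => _ /=; rewrite ?powRr0 ?powRr1 ?(ltW l0) //; field.
  - by move=> a; rewrite /psign /= psign_nosign.
-
  exists lam, (1 - lam^-1), 1%N, (fun _ b s => (s == nat_of_bool b)%:R), (fun b => 2^-1).
  split.
  - by [].
  - by move=> *; rewrite ler0n.
  - by move=> *; rewrite invr_ge0 ler0n.
  - move=> a xe Hx; rewrite big_ord1 prod_nat_forall.
    by case: ifP => _ /=; rewrite ?powRr0 ?powRr1 ?(ltW l0) //; field.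
  - by move=> a; rewrite /psign /= psign_sign.
-
  exists lam, (1 - lam^-1), 2%N,
    (fun c b s => (s == nat_of_bool (if val c == 0%N then b else ~~ b))%:R), (fun b => 2^-1).
  split.
  - by [].
  - by move=> *; rewrite ler0n.
  - by move=> *; rewrite invr_ge0 ler0n.
  - move=> a xe Hx; rewrite !big_ord_recl big_ord0 addr0 /= !prod_nat_forall.
    have K0 : (0 < K)%N by apply: leq_trans ok.
    have -> : (([forall j, xe j == a j] : bool)%:R + ([forall j, xe j == ~~ a j] : bool)%:R : R)
        = ([forall j, xe j == a j] || [forall j, xe j == ~~ a j])%:R.
      case: (boolP [forall j, xe j == a j]) => [/forallP h1|h1] /=; last by rewrite add0r.
      case: (boolP [forall j, xe j == ~~ a j]) => [/forallP h2|h2] /=; last by rewrite addr0.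
      have := h1 (Ordinal K0); rewrite (eqP (h2 (Ordinal K0))).
      by case: (a (Ordinal K0)).
    by case: ifP => _ /=; rewrite ?powRr0 ?powRr1 ?(ltW l0) //; field.
  - by move=> a; rewrite /psign /= psign_sign.
Qed.

End Model.


Section Main1.
Variable R : realType.

Lemma fin_noinf (x : \bar R) : x \is a fin_num -> x != +oo%E.
Proof. by case: x. Qed.

Definition wgt (m : model R) lam N (e : hedge R m N) (x : {ffun 'I_N -> 'I_(spins R m)}) :=
  lampow R lam (Hedge R m e.2 (fun j => nat_of_ord (x (e.1 j)))).
Definition nodew (m : model R) lam N (x : {ffun 'I_N -> 'I_(spins R m)}) :=
  \prod_(i < N) lampow R lam (Hnode R m (x i)).
Arguments wgt {m} lam {N} e x.
Arguments nodew {m} lam {N} x.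


Lemma Zpart_factor (m : model R) lam N M (G : hgraph R m N M) : 0 < lam ->
  Zpart R m lam N M G = \sum_x nodew lam x * \prod_(k < M) wgt lam (G k) x.
Proof.
move=> l0; rewrite /Zpart; apply: eq_bigr => x _.
rewrite /Ham lampowD ?lampow_sum //.
- by move=> *; exact: Hedge_noinf.
- by move=> *; exact: fin_noinf (Hnode_fin _ _ _).
- by apply: sum_noinf => *; exact: fin_noinf (Hnode_fin _ _ _).
- by apply: sum_noinf => *; exact: Hedge_noinf.
Qed.

Lemma spins_gt0 (m : model R) : model_ok R m -> (0 < spins R m)%N.
Proof. by case: m. Qed.

Lemma nodew_ge0 (m : model R) lam N (x : {ffun 'I_N -> 'I_(spins R m)}) : 0 <= nodew lam x.
Proof. by apply: prodr_ge0 => *; exact: lampow_ge0. Qed.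

Lemma wgt_ge0 (m : model R) lam N (e : hedge R m N) x : 0 <= wgt lam e x.
Proof. exact: lampow_ge0. Qed.

Lemma Zpart_pos (m : model R) lam N M (G : hgraph R m N M) :
  model_ok R m -> 0 < lam -> 0 < Zpart R m lam N M G.
Proof.
move=> ok l0; rewrite Zpart_factor //.
pose x0 : {ffun 'I_N -> 'I_(spins R m)} := [ffun _ => Ordinal (spins_gt0 m ok)].
rewrite (bigD1 x0) //=.
have h1 : 0 < nodew lam x0 * \prod_(k < M) wgt lam (G k) x0.
  apply: mulr_gt0; apply: prodr_gt0 => i _.
    by apply: lampow_gt0 => //; exact: Hnode_fin.
  rewrite /wgt.
  have -> : (fun j => nat_of_ord (x0 ((G i).1 j))) = (fun _ => 0%N).
    by apply: funext => j; rewrite ffunE.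
  by apply: lampow_gt0 => //; exact: Hedge_zero_fin.
have h2 : 0 <= \sum_(i | i != x0) nodew lam i * \prod_(k < M) wgt lam (G k) i.
  apply: sumr_ge0 => i _; apply: mulr_ge0; first exact: nodew_ge0.
  by apply: prodr_ge0 => *; exact: wgt_ge0.
lra.
Qed.

Lemma pvert_ge0 (m : model R) N N1 N2 r k v : 0 <= pvert R m N N1 N2 r k v.
Proof.
rewrite /pvert; case: ifP => _; first by rewrite invr_ge0.
by apply: addr_ge0; apply: mulr_ge0 => //; apply: mulr_ge0; rewrite ?invr_ge0 ?divr_ge0.
Qed.

Lemma psign_ge0 (m : model R) a : 0 <= psign R m a.
Proof. by rewrite /psign; case: ifP => _; rewrite ?invr_ge0. Qed.

End Main1.


Section Main2.
Variable R : realType.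

Lemma count_lt (N N1 : nat) : (N1 <= N)%N ->
  \sum_(u < N) (((u < N1)%N)%:R : R) = N1%:R.
Proof.
move=> h.
rewrite -(big_mkord xpredT (fun u => (((u < N1)%N)%:R : R))) (big_cat_nat (leq0n N1) h) /=.
rewrite (eq_big_nat _ _ (F2 := fun _ => 1)); last by move=> i /andP[_ ->].
rewrite [X in _ + X](eq_big_nat _ _ (F2 := fun _ => 0)); last first.
  by move=> i /andP[hi _]; rewrite ltnNge hi.
by rewrite [X in _ + X]big1_eq addr0 sumr_const_nat subn0.
Qed.

Lemma count_ge (N N1 : nat) : (N1 <= N)%N ->
  \sum_(u < N) (((N1 <= u)%N)%:R : R) = (N - N1)%:R.
Proof.
move=> h.
have e : forall u : 'I_N, (((N1 <= u)%N)%:R : R) = 1 - ((u < N1)%N)%:R.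
  by move=> u; rewrite ltnNge; case: (N1 <= u)%N; rewrite ?subr0 ?subrr.
rewrite (eq_bigr _ (fun u _ => e u)) sumrB count_lt // sumr_const card_ord.
by rewrite natrB.
Qed.

Lemma pvert_prod (m : model R) N N1 N2 r k (g : 'I_N -> R) :
  \sum_(v : {ffun 'I_(arity R m) -> 'I_N}) pvert R m N N1 N2 r k v * \prod_(j < arity R m) g (v j)
  = if (k < r)%N then ((N ^ arity R m)%:R)^-1 * (\sum_u g u) ^+ arity R m
    else N1%:R / N%:R * ((N1 ^ arity R m)%:R)^-1 * (\sum_(u : 'I_N) ((u < N1)%N)%:R * g u) ^+ arity R m
       + N2%:R / N%:R * ((N2 ^ arity R m)%:R)^-1 * (\sum_(u : 'I_N) ((N1 <= u)%N)%:R * g u) ^+ arity R m.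
Proof.
rewrite /pvert; case: ifP => _; first by rewrite -mulr_sumr sum_prod_pow.
rewrite -!sum_prod_pow !mulr_sumr -big_split /=; apply: eq_bigr => v _.
rewrite mulrDl -!mulrA -!(prod_nat_forall R) -!big_split /=.
by congr (_ * _ + _ * _).
Qed.

Lemma pvert_sum1 (m : model R) N N1 N2 r k :
  (1 <= N1)%N -> (1 <= N2)%N -> (N1 + N2 = N)%N ->
  \sum_(v : {ffun 'I_(arity R m) -> 'I_N}) pvert R m N N1 N2 r k v = 1.
Proof.
move=> h1 h2 hN.
have N1le : (N1 <= N)%N by rewrite -hN leq_addr.
have nN : N%:R != 0 :> R by rewrite pnatr_eq0 -hN; apply/eqP; lia.
have nN1 : N1%:R != 0 :> R by rewrite pnatr_eq0; apply/eqP; lia.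
have nN2 : N2%:R != 0 :> R by rewrite pnatr_eq0; apply/eqP; lia.
transitivity (\sum_(v : {ffun 'I_(arity R m) -> 'I_N})
   pvert R m N N1 N2 r k v * \prod_(j < arity R m) (fun _ : 'I_N => (1 : R)) (v j)).
  by apply: eq_bigr => v _; rewrite big1 ?mulr1.
rewrite (pvert_prod m N N1 N2 r k (fun _ => 1)); case: ifP => _.
  by rewrite sumr_const card_ord natrX mulVf // expf_neq0.
under eq_bigr do rewrite mulr1.
rewrite [X in _ * X ^+ _ + _]count_lt //.
under [X in _ + _ * X ^+ _]eq_bigr do rewrite mulr1.
rewrite count_ge // -hN addKn !natrX !mulfVK ?expf_neq0 //.
by rewrite -mulrDl -natrD hN divff.
Qed.

Lemma pvert_mono (m : model R) N N1 N2 r1 k1 r2 k2 (g : 'I_N -> R) :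
  (1 <= N1)%N -> (1 <= N2)%N -> (N1 + N2 = N)%N -> (forall u, 0 <= g u) ->
  ~~ (k1 < r1)%N -> (k2 < r2)%N ->
  \sum_(v : {ffun 'I_(arity R m) -> 'I_N}) pvert R m N N1 N2 r2 k2 v * \prod_(j < arity R m) g (v j)
  <= \sum_(v : {ffun 'I_(arity R m) -> 'I_N}) pvert R m N N1 N2 r1 k1 v * \prod_(j < arity R m) g (v j).
Proof.
move=> h1 h2 hN g0 hk1 hk2.
have nN : N%:R != 0 :> R by rewrite pnatr_eq0 -hN; apply/eqP; lia.
have nN1 : N1%:R != 0 :> R by rewrite pnatr_eq0; apply/eqP; lia.
have nN2 : N2%:R != 0 :> R by rewrite pnatr_eq0; apply/eqP; lia.
have pN : 0 < N%:R :> R by rewrite ltr0n -hN; lia.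
have pN1 : 0 < N1%:R :> R by rewrite ltr0n; lia.
have pN2 : 0 < N2%:R :> R by rewrite ltr0n; lia.
rewrite !pvert_prod (negbTE hk1) hk2.
set a := \sum_(u : 'I_N) ((u < N1)%N)%:R * g u.
set b := \sum_(u : 'I_N) ((N1 <= u)%N)%:R * g u.
have hab : \sum_u g u = a + b.
  rewrite /a /b -big_split /=; apply: eq_bigr => u _.
  by case: (ltnP u N1) => _; rewrite /= ?mul1r ?mul0r ?addr0 ?add0r.
have a0 : 0 <= a by apply: sumr_ge0 => u _; apply: mulr_ge0.
have b0 : 0 <= b by apply: sumr_ge0 => u _; apply: mulr_ge0.
set K := arity R m.
have := convex_pow R (N1%:R / N%:R) (N2%:R / N%:R) (a / N1%:R) (b / N2%:R) K.
have e1 : N1%:R / N%:R * (a / N1%:R) + N2%:R / N%:R * (b / N2%:R) = (a + b) / N%:R by field; rewrite ?nN ?nN1 ?nN2.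
rewrite e1 hab !exprMn !exprVn !natrX.
have -> : N1%:R / N%:R * (a ^+ K * N1%:R ^- K) = N1%:R / N%:R * N1%:R ^- K * a ^+ K by ring.
have -> : N2%:R / N%:R * (b ^+ K * N2%:R ^- K) = N2%:R / N%:R * N2%:R ^- K * b ^+ K by ring.
move=> H; rewrite mulrC; apply: H.
- by rewrite divr_ge0 // ltW.
- by rewrite divr_ge0 // ltW.
- by rewrite -mulrDl -natrD hN divff.
- by rewrite divr_ge0 // ltW.
- by rewrite divr_ge0 // ltW.
Qed.

End Main2.


Section Main3.
Variable R : realType.

Lemma hedge_sum (m : model R) N N1 N2 r k (rho : bool -> R) (psi : bool -> 'I_N -> R) :
  (forall a : {ffun 'I_(arity R m) -> bool}, psign R m a = \prod_(j < arity R m) rho (a j)) ->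
  \sum_(e : hedge R m N) pvert R m N N1 N2 r k e.1 * psign R m e.2
      * \prod_(j < arity R m) psi (e.2 j) (e.1 j)
  = \sum_(v : {ffun 'I_(arity R m) -> 'I_N}) pvert R m N N1 N2 r k v
      * \prod_(j < arity R m) (\sum_b rho b * psi b (v j)).
Proof.
move=> hps.
rewrite -(pair_bigA _ (fun (v : {ffun 'I_(arity R m) -> 'I_N}) (a : {ffun 'I_(arity R m) -> bool}) =>
   pvert R m N N1 N2 r k v * psign R m a * \prod_(j < arity R m) psi (a j) (v j))) /=.
apply: eq_bigr => v _.
rewrite (bigA_distr_bigA (fun (j : 'I_(arity R m)) (b : bool) => rho b * psi b (v j))) /=.
rewrite mulr_sumr; apply: eq_bigr => a _.
by rewrite hps big_split /= mulrA.
Qed.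

Definition Fe (m : model R) N nc (phi : 'I_nc -> bool -> nat -> R) (e : hedge R m N)
  (x : {ffun 'I_N -> 'I_(spins R m)}) : R :=
  \sum_(c < nc) \prod_(j < arity R m) phi c (e.2 j) (x (e.1 j)).
Arguments Fe {m N nc} phi e x.

Definition Se (m : model R) N nc (phi : 'I_nc -> bool -> nat -> R)
  (W0 : {ffun 'I_N -> 'I_(spins R m)} -> R) (e : hedge R m N) : R :=
  \sum_x W0 x * Fe phi e x.
Arguments Se {m N nc} phi W0 e.

Lemma Q_eq (m : model R) N N1 N2 nc (phi : 'I_nc -> bool -> nat -> R) (rho : bool -> R)
  (W0 : {ffun 'I_N -> 'I_(spins R m)} -> R) r k t :
  (forall a : {ffun 'I_(arity R m) -> bool}, psign R m a = \prod_(j < arity R m) rho (a j)) ->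
  \sum_(e : hedge R m N) (pvert R m N N1 N2 r k e.1 * psign R m e.2) * Se phi W0 e ^+ t
  = \sum_(X : {ffun 'I_t -> {ffun 'I_N -> 'I_(spins R m)}}) (\prod_(l < t) W0 (X l)) *
     \sum_(ga : {ffun 'I_t -> 'I_nc}) \sum_(v : {ffun 'I_(arity R m) -> 'I_N})
       pvert R m N N1 N2 r k v * \prod_(j < arity R m)
         (\sum_b rho b * \prod_(l < t) phi (ga l) b (X l (v j))).
Proof.
move=> hps.
under eq_bigr do rewrite /Se pow_sum_ffun mulr_sumr.
rewrite exchange_big /=; apply: eq_bigr => X _.
transitivity ((\prod_(l < t) W0 (X l)) * \sum_(e : hedge R m N)
    pvert R m N N1 N2 r k e.1 * psign R m e.2 * \prod_(l < t) Fe phi e (X l)).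
  rewrite mulr_sumr; apply: eq_bigr => e _; rewrite big_split /=; ring.
congr (_ * _).
transitivity (\sum_(ga : {ffun 'I_t -> 'I_nc}) \sum_(e : hedge R m N)
    pvert R m N N1 N2 r k e.1 * psign R m e.2 *
    \prod_(j < arity R m) (fun b u => \prod_(l < t) phi (ga l) b (X l u)) (e.2 j) (e.1 j)).
  rewrite exchange_big /=; apply: eq_bigr => e _.
  rewrite -mulr_sumr; congr (_ * _).
  rewrite /Fe (bigA_distr_bigA (fun (l : 'I_t) (c : 'I_nc) =>
     \prod_(j < arity R m) phi c (e.2 j) (X l (e.1 j)))) /=.
  by apply: eq_bigr => ga _; rewrite exchange_big.
apply: eq_bigr => ga _.
exact: (hedge_sum _ _ _ _ _ _ _ (fun b u => \prod_(l < t) phi (ga l) b (X l u)) hps).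
Qed.

Lemma moment (m : model R) N N1 N2 nc (phi : 'I_nc -> bool -> nat -> R) (rho : bool -> R)
  (W0 : {ffun 'I_N -> 'I_(spins R m)} -> R) r1 k1 r2 k2 t :
  (1 <= N1)%N -> (1 <= N2)%N -> (N1 + N2 = N)%N ->
  (forall c b s, 0 <= phi c b s) -> (forall b, 0 <= rho b) -> (forall x, 0 <= W0 x) ->
  (forall a : {ffun 'I_(arity R m) -> bool}, psign R m a = \prod_(j < arity R m) rho (a j)) ->
  ~~ (k1 < r1)%N -> (k2 < r2)%N ->
  \sum_(e : hedge R m N) (pvert R m N N1 N2 r2 k2 e.1 * psign R m e.2) * Se phi W0 e ^+ t
  <= \sum_(e : hedge R m N) (pvert R m N N1 N2 r1 k1 e.1 * psign R m e.2) * Se phi W0 e ^+ t.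
Proof.
move=> h1 h2 hN phi0 rho0 W00 hps hk1 hk2.
rewrite !(Q_eq _ _ _ _ _ _ _ _ _ _ _ hps).

apply: ler_sum => X _; apply: ler_wpM2l; first by apply: prodr_ge0 => l _.
apply: ler_sum => ga _; apply: (pvert_mono R m N N1 N2 r1 k1 r2 k2 (fun u => \sum_b rho b * \prod_(l < t) phi (ga l) b (X l u)) h1 h2 hN) => // u.
by apply: sumr_ge0 => b _; apply: mulr_ge0 => //; apply: prodr_ge0 => l _.
Qed.

End Main3.


Arguments upd {T M}.
Arguments Se {R m N nc} phi W0 e.
Arguments Fe {R m N nc} phi e x.
Arguments nodew {R m} lam {N} x.
Arguments wgt {R m} lam {N} e x.
Section Main4.
Variable R : realType.

Lemma qsum (m : model R) N N1 N2 r k :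
  (1 <= N1)%N -> (1 <= N2)%N -> (N1 + N2 = N)%N ->
  \sum_(e : hedge R m N) pvert R m N N1 N2 r k e.1 * psign R m e.2
  = \sum_(a : {ffun 'I_(arity R m) -> bool}) psign R m a.
Proof.
move=> h1 h2 hN.
rewrite -(pair_bigA _ (fun (v : {ffun 'I_(arity R m) -> 'I_N}) (a : {ffun 'I_(arity R m) -> bool}) =>
   pvert R m N N1 N2 r k v * psign R m a)) /=.
under eq_bigr do rewrite -mulr_sumr.
by rewrite -mulr_suml pvert_sum1 // mul1r.
Qed.

Lemma Zupd (m : model R) lam N M (G : hgraph R m N M) (k0 : 'I_M) (e : hedge R m N) :
  0 < lam ->
  Zpart R m lam N M (upd G k0 e) =
  \sum_x (nodew lam x * \prod_(k < M | k != k0) wgt lam (G k) x) * wgt lam e x.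
Proof.
move=> l0; rewrite Zpart_factor //; apply: eq_bigr => x _.
rewrite (bigD1 k0) //= ffunE eqxx.
rewrite (eq_bigr (fun k => wgt lam (G k) x)); last first.
  by move=> k /negbTE hk; rewrite ffunE hk.
ring.
Qed.

Lemma perG (m : model R) lam N N1 N2 M (k0 : 'I_M) r1 r2 (G : hgraph R m N M) :
  model_ok R m -> 1 < lam -> (1 <= N1)%N -> (1 <= N2)%N -> (N1 + N2 = N)%N ->
  ~~ (k0 < r1)%N -> (k0 < r2)%N ->
  \sum_(e : hedge R m N) (pvert R m N N1 N2 r1 k0 e.1 * psign R m e.2)
      * ln (Zpart R m lam N M (upd G k0 e))
  <= \sum_(e : hedge R m N) (pvert R m N N1 N2 r2 k0 e.1 * psign R m e.2)
      * ln (Zpart R m lam N M (upd G k0 e)).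
Proof.
move=> ok l1 h1 h2 hN hk1 hk2.
have l0 : 0 < lam by lra.
have [A [d [nc [phi [rho [[A0 /andP[d0 d1]] phi0 rho0 hw hps]]]]]] := model_decomp R m lam ok l1.
pose W0 x := nodew lam x * \prod_(k < M | k != k0) wgt lam (G k) x.
have W00 x : 0 <= W0 x.
  apply: mulr_ge0; first exact: nodew_ge0.
  by apply: prodr_ge0 => *; exact: wgt_ge0.
pose Z0 := \sum_x W0 x.
pose S := Se phi W0.
have hZ e : Zpart R m lam N M (upd G k0 e) = A * (Z0 - d * S e).
  rewrite Zupd // /Z0 /S /Se.
  transitivity (\sum_x (A * W0 x - A * (d * (W0 x * Fe phi e x)))).
    apply: eq_bigr => x _; rewrite [wgt lam e x]/wgt hw; first by rewrite /Fe /W0; ring.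
    all: try (by move=> j; exact: ltn_ord).
  rewrite sumrB -mulr_sumr -mulr_sumr -mulr_sumr; ring.
have Fe0 e x : 0 <= Fe phi e x.
  by apply: sumr_ge0 => c _; apply: prodr_ge0 => j _; exact: phi0.
have S0 e : 0 <= S e by apply: sumr_ge0 => x _; apply: mulr_ge0.
have pos e : 0 < Z0 - d * S e.
  by rewrite -(pmulr_rgt0 _ A0) -hZ; exact: Zpart_pos.
have N0 : (0 < N)%N by lia.
pose e0 : hedge R m N := ([ffun _ => Ordinal N0], [ffun _ => false]).
have Z0pos : 0 < Z0.
  have := pos e0; have := S0 e0; have : 0 <= d * S e0 by exact: mulr_ge0.
  lra.
pose y e := d * S e / Z0.
have y01 e : 0 <= y e < 1.
  apply/andP; split; first by rewrite /y divr_ge0 ?mulr_ge0 // ltW.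
  by rewrite /y ltr_pdivrMr // mul1r; have := pos e; lra.
have hln e : ln (Zpart R m lam N M (upd G k0 e)) = ln A + ln Z0 + ln (1 - y e).
  have hy1 : 0 < 1 - y e by have := y01 e; case/andP => _; lra.
  rewrite hZ.
  have -> : Z0 - d * S e = Z0 * (1 - y e).
    by rewrite /y; field; exact: lt0r_neq0.
  rewrite lnM ?posrE ?mulr_gt0 // lnM ?posrE //; ring.
under eq_bigr do rewrite hln mulrDr.
under [X in _ <= X]eq_bigr do rewrite hln mulrDr.
rewrite !big_split /= -!mulr_suml !qsum //.
rewrite lerD2l.
apply: (core_ineq R _ (fun e => pvert R m N N1 N2 r2 k0 e.1 * psign R m e.2)
   (fun e => pvert R m N N1 N2 r1 k0 e.1 * psign R m e.2) y).
- by move=> e; apply: mulr_ge0; [exact: pvert_ge0 | exact: psign_ge0].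
- by move=> e; apply: mulr_ge0; [exact: pvert_ge0 | exact: psign_ge0].
- exact: y01.
move=> t.
have ey e : y e ^+ t.+1 = (d / Z0) ^+ t.+1 * S e ^+ t.+1 by rewrite /y mulrAC exprMn.
under eq_bigr do rewrite ey mulrCA.
under [X in _ <= X]eq_bigr do rewrite ey mulrCA.
rewrite -!mulr_sumr; apply: ler_wpM2l; first by apply: exprn_ge0; rewrite divr_ge0 // ltW.
exact: (moment R m N N1 N2 nc phi rho W0 r1 k0 r2 k0 t.+1 h1 h2 hN phi0 rho0 W00 hps hk1 hk2).
Qed.

End Main4.

Arguments upd {T M}.

Lemma pgraph_upd (R : realType) (m : model R) N N1 N2 M (k0 : 'I_M) r r' (G : hgraph R m N M) e :
  (forall k : 'I_M, k != k0 -> (k < r')%N = (k < r)%N) ->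
  pgraph R m N N1 N2 M r' (upd G k0 e) =
  (pvert R m N N1 N2 r' k0 e.1 * psign R m e.2) *
  \prod_(k < M | k != k0) (pvert R m N N1 N2 r k (G k).1 * psign R m (G k).2).
Proof.
move=> hs; rewrite /pgraph (bigD1 k0) //= ffunE eqxx; congr (_ * _).
by apply: eq_bigr => k hk; rewrite ffunE (negbTE hk) /pvert (hs k hk).
Qed.

Theorem proposition3 (R : realType) (c lam : R) (m : model R)
  (N N1 N2 : nat) :
  0 < c -> 1 < lam -> model_ok R m ->
  (1 <= N1 <= N - 1)%N -> (1 <= N2 <= N - 1)%N -> (N1 + N2 = N)%N ->
  forall r : nat, (1 <= r <= Num.truncn (c * N%:R))%N ->
    ElogZ R m lam N N1 N2 (Num.truncn (c * N%:R)) r.-1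
    <= ElogZ R m lam N N1 N2 (Num.truncn (c * N%:R)) r.
Proof.
move=> c0 l1 ok /andP[h1 _] /andP[h2 _] hN r /andP[r1 rM].
set M := Num.truncn (c * N%:R) in rM *.
have k0lt : (r.-1 < M)%N by lia.
pose k0 : 'I_M := Ordinal k0lt.
have hk1 : ~~ (k0 < r.-1)%N by rewrite /= ltnn.
have hk2 : (k0 < r)%N by rewrite /=; lia.
have hsame : forall k : 'I_M, k != k0 -> (k < r.-1)%N = (k < r)%N.
  move=> k hk; have hk' : (nat_of_ord k != r.-1) by [].
  move/eqP: hk' => hk'; apply/idP/idP => H; lia.
have N0 : (0 < N)%N by lia.
pose e0 : hedge R m N := ([ffun _ => Ordinal N0], [ffun _ => false]).
have cardE : 0 < #|{: hedge R m N}|%:R :> R.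
  by rewrite ltr0n; apply/card_gt0P; exists e0.
rewrite -(ler_pM2l cardE) /ElogZ !(sum_upd R _ _ k0).
apply: ler_sum => G _.
rewrite (eq_bigr (fun e => \prod_(k < M | k != k0)
     (pvert R m N N1 N2 r k (G k).1 * psign R m (G k).2) *
   ((pvert R m N N1 N2 r.-1 k0 e.1 * psign R m e.2) *
     ln (Zpart R m lam N M (upd G k0 e))))); last first.
  by move=> e _; rewrite (pgraph_upd _ _ _ _ _ _ _ r) //; ring.
rewrite [X in _ <= X](eq_bigr (fun e => \prod_(k < M | k != k0)
     (pvert R m N N1 N2 r k (G k).1 * psign R m (G k).2) *
   ((pvert R m N N1 N2 r k0 e.1 * psign R m e.2) *
     ln (Zpart R m lam N M (upd G k0 e))))); last first.
  by move=> e _; rewrite (pgraph_upd _ _ _ _ _ _ _ r) //; ring.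
rewrite -!mulr_sumr; apply: ler_wpM2l.
  apply: prodr_ge0 => k _; apply: mulr_ge0; [exact: pvert_ge0 | exact: psign_ge0].
exact: perG.
Qed.
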